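(* For every $n\in\mathbb N$ the set $\mathbb P^T_n=\{p^{(k)}_n: k\in\mathbb N\}$ is not (R)-dense. Moreover, $\lim_{k\to+\infty}p^{(k+1)}_n/p^{(k)}_n=+\infty$, and $R^d(\mathbb P^T_n)\cap(0,+\infty)=\emptyset$.
   Context: Let $p_n$ denote the $n$-th prime number. Define $p^{(0)}_n=n$ and recursively $p^{(k+1)}_n=p_{p^{(k)}_n}$ for $k\in\mathbb N_0$. For $A\subset\mathbb N$, its ratio set is $R(A)=\{a/b:a,b\in A\}$; $A$ is (R)-dense if $R(A)$ is dense in $(0,+\infty)$. For $B\subset(0,+\infty)$, $B^d$ denotes the set of accumulation points of $B$, and $R^d(A)=(R(A))^d$. *)

(* Defs.v *)
From HB Require Import structures.
From mathcomp Require Import all_boot all_order all_algebra.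
From mathcomp Require Import all_classical all_reals all_analysis.
Unset Printing Implicit Defensive.
Import Order.TTheory GRing.Theory Num.Theory.
Local Open Scope classical_set_scope.
Local Open Scope ring_scope.

Definition next_prime (m : nat) : nat :=
  ex_minn (let: exist2 p H1 H2 := prime_above m in
           ex_intro (fun p => (m < p)%N && prime p) p (introT andP (conj H1 H2))).

(* nth_prime n = p_n, the n-th prime, 1-indexed: p_1 = 2, p_2 = 3, ...
   (nth_prime 0 = 0 is a junk value, never used for n >= 1). *)
Fixpoint nth_prime (n : nat) : nat :=
  if n is n'.+1 then next_prime (nth_prime n') else 0%N.

Fixpoint iter_prime (k n : nat) : nat :=
  if k is k'.+1 then nth_prime (iter_prime k' n) else n.

(* P^T_n = { p^(k)_n : k in N }, N = {1,2,...} *)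
Definition primes_tower (n : nat) : set nat :=
  [set m | exists2 k : nat, (0 < k)%N & m = iter_prime k n].

Definition ratio_set (R : realType) (A : set nat) : set R :=
  [set r | exists a b : nat, [/\ A a, A b & r = a%:R / b%:R]].

Definition R_dense (R : realType) (A : set nat) : Prop :=
  forall x y : R, 0 < x -> x < y ->
    exists2 r, ratio_set R A r & x < r < y.

(* Main.v *)
Require Import Defs.
From HB Require Import structures.
From mathcomp Require Import all_boot all_order all_algebra.
From mathcomp Require Import all_classical all_reals all_analysis.
From mathcomp Require Import zify.
Import Order.TTheory GRing.Theory Num.Theory.

Lemma next_primeP a : [/\ (a < next_prime a)%N, prime (next_prime a) &
  forall q, (a < q)%N -> prime q -> (next_prime a <= q)%N].
Proof.
rewrite /next_prime; case: ex_minnP => p /andP[h1 h2] hmin; split => //.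
by move=> q aq pq; apply: hmin; rewrite aq pq.
Qed.

Lemma bin_le_exp m k : ('C(m, k) <= 2 ^ m)%N.
Proof.
elim: m k => [|m IH] [|k] //=; first by rewrite bin0 expn_gt0.
rewrite binS expnS mul2n -addnn; apply: leq_add; exact: IH.
Qed.

Lemma coprime_fact p n : prime p -> (n < p)%N -> coprime p n`!.
Proof.
move=> pp; elim: n => [|n IH] hn; first by rewrite fact0 coprimen1.
rewrite factS coprimeMr IH ?(ltnW hn) // andbT prime_coprime //.
by rewrite gtnNdvd.
Qed.

Lemma coprime_prod_primes p s : prime p -> p \notin s -> all prime s ->
  coprime p (\prod_(q <- s) q).
Proof.
move=> pp; elim: s => [|q s IH]; first by rewrite big_nil coprimen1.
rewrite inE negb_or => /andP[pq ps] /andP[qp sp].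
rewrite big_cons coprimeMr IH // andbT prime_coprime // dvdn_prime2 //.
Qed.

Lemma prod_primes_dvd s X : uniq s -> all prime s -> (forall p, p \in s -> p %| X) ->
  \prod_(q <- s) q %| X.
Proof.
elim: s => [|q s IH]; first by rewrite big_nil dvd1n.
move=> /andP[qs us] /andP[qp sp] hd.
rewrite big_cons Gauss_dvd ?coprime_prod_primes // hd ?mem_head //= IH //.
by move=> p ps; apply: hd; rewrite inE ps orbT.
Qed.

Lemma prod_ge s n : (forall p, p \in s -> n <= p)%N -> (n ^ size s <= \prod_(q <- s) q)%N.
Proof.
elim: s => [|q s IH] h; first by rewrite big_nil.
rewrite big_cons /= expnS leq_mul ?h ?mem_head // IH // => p ps.
by apply: h; rewrite inE ps orbT.
Qed.

Definition cnt n := count prime (iota n.+1 n).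
Definition pic x := count prime (iota 0 x.+1).

Lemma cnt_bound n : (n ^ cnt n <= 4 ^ n)%N.
Proof.
set s := [seq q <- iota n.+1 n | prime q].
have -> : cnt n = size s by rewrite size_filter.
have H1 : \prod_(q <- s) q %| 'C(n + n, n).
  apply: prod_primes_dvd.
  - by rewrite filter_uniq ?iota_uniq.
  - by rewrite all_filter; apply/allP => x _; apply/implyP.
  move=> p; rewrite mem_filter mem_iota => /andP[pp /andP[h1 h2]].
  have hf := bin_fact (leq_addr n n).
  rewrite addnK in hf.
  have : p %| (n + n)`! by apply: dvdn_fact; apply/andP; split; lia.
  rewrite -hf Gauss_dvdl //.
  by rewrite coprimeMr !coprime_fact.
have H2 : (\prod_(q <- s) q <= 'C(n + n, n))%N.
  by apply: dvdn_leq => //; rewrite bin_gt0 leq_addr.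
have H3 : (n ^ size s <= \prod_(q <- s) q)%N.
  by apply: prod_ge => p; rewrite mem_filter mem_iota => /andP[_ /andP[h1 _]]; lia.
apply: leq_trans H3 _.
apply: leq_trans H2 _; apply: leq_trans (bin_le_exp _ _) _.
by rewrite expnD -expnMn.
Qed.

Lemma cnt_small K n : (4 ^ K < n)%N -> (K * cnt n <= n)%N.
Proof.
move=> hK; rewrite leqNgt; apply/negP => hc.
have n0 : (0 < n)%N by lia.
have h1 : (n ^ n <= n ^ (cnt n * K))%N by apply: leq_pexp2l => //; lia.
have h2 : (n ^ (cnt n * K) <= (4 ^ K) ^ n)%N.
  have e : ((4 ^ K) ^ n = (4 ^ n) ^ K)%N by rewrite -!expnM mulnC.
  have K0 : (0 < K)%N by move: hc; case: (K) => //; rewrite mul0n.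
  by rewrite expnM e leq_exp2r ?cnt_bound.
have h3 : ((4 ^ K) ^ n < n ^ n)%N by rewrite ltn_exp2r.
lia.
Qed.

Lemma pic_split x : (pic x <= pic x./2 + cnt x./2 + 1)%N.
Proof.
set n := x./2.
have hx : x = n + n + odd x by rewrite addnn /n addnC odd_double_half.
rewrite /pic /cnt {1}hx.
have -> : (n + n + odd x).+1 = n.+1 + n + odd x by lia.
rewrite !iotaD !count_cat leq_add2l.
have := count_size prime (iota (0 + n.+1 + n) (odd x)).
rewrite size_iota; case: (odd x) => /=; lia.
Qed.

Lemma pic_le x : (pic x <= x.+1)%N.
Proof. by have := count_size prime (iota 0 x.+1); rewrite size_iota. Qed.

Lemma pic_bound K N1 x : (4 ^ K < N1)%N -> (K <= N1)%N ->
  (K * pic x <= 2 * x + K * (2 * N1))%N.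
Proof.
move=> h4 hK; elim/ltn_ind: x => x IH.
case: (ltnP x (2 * N1)) => hx.
  have := pic_le x => h.
  have : (K * pic x <= K * (2 * N1))%N by apply: leq_mul => //; lia.
  lia.
set n := x./2.
have hxn : x = n + n + odd x by rewrite addnn /n addnC odd_double_half.
have ho : (odd x <= 1)%N by case: (odd x).
have hn1 : (N1 <= n)%N by lia.
have hlt : (n < x)%N by lia.
have h1 := IH n hlt.
have h2 := cnt_small K n (leq_trans h4 hn1).
have h3 := pic_split x.
have : (K * pic x <= K * pic n + K * cnt n + K)%N.
  by rewrite -[in X in (_ <= _ + X)%N](muln1 K) -!mulnDr leq_mul2l h3 orbT.
rewrite -/n in h3 *.
lia.
Qed.

Lemma pic_next a : pic (next_prime a) = (pic a).+1.
Proof.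
case: (next_primeP a) => h1 h2 h3.
rewrite /pic.
have -> : (next_prime a).+1 = a.+1 + (next_prime a - a.+1) + 1 by lia.
rewrite !iotaD !count_cat /=.
have -> : (0 + a.+1 + (next_prime a - a.+1) = next_prime a)%N by lia.
rewrite h2 /= addn0.
have -> : count prime (iota (0 + a.+1) (next_prime a - a.+1)) = 0.
  apply/eqP; rewrite -leqn0 leqNgt -has_count; apply/hasPn => q.
  rewrite mem_iota => /andP[q1 q2]; apply/negP => pq.
  have hq : (a < q)%N by lia.
  have := h3 q hq pq; lia.
by rewrite addn0 addn1.
Qed.

Lemma pic_nth m : pic (nth_prime m) = m.
Proof. by elim: m => [|m IH] //=; rewrite pic_next IH. Qed.

Lemma nth_prime_lin K : exists m0, forall m, (m0 <= m)%N -> (K * m <= nth_prime m)%N.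
Proof.
set K' := (2 * K + 2)%N.
exists (K' * (2 * maxn (4 ^ K').+1 K')); move=> m hm.
have := pic_bound K' (maxn (4 ^ K').+1 K') (nth_prime m).
rewrite pic_nth leq_max leqnn leq_max leqnn orbT => /(_ isT isT).
rewrite /K' in hm *; nia.
Qed.

Lemma nth_prime_gtS m : (m.+1 < nth_prime m.+1)%N.
Proof.
elim: m => [|m IH].
  by case: (next_primeP 0) => _ /prime_gt1.
have -> : nth_prime m.+2 = next_prime (nth_prime m.+1) by [].
case: (next_primeP (nth_prime m.+1)) => h _ _; lia.
Qed.

Lemma nth_prime_gt m : (0 < m)%N -> (m < nth_prime m)%N.
Proof. by case: m => // m _; exact: nth_prime_gtS. Qed.

Lemma iter_ge n k : (0 < n)%N -> (n + k <= iter_prime k n)%N.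
Proof.
move=> hn; elim: k => [|k IH] /=; first by rewrite addn0.
have h0 : (0 < iter_prime k n)%N by lia.
have := nth_prime_gt (iter_prime k n) h0. lia.
Qed.

Lemma iter_mono n i j : (0 < n)%N -> (j <= i)%N -> (iter_prime j n <= iter_prime i n)%N.
Proof.
move=> hn; elim: i => [|i IH]; first by rewrite leqn0 => /eqP ->.
rewrite leq_eqVlt => /orP[/eqP -> //|hj].
apply: leq_trans (IH hj) _ => /=.
have := iter_ge n i hn => h1.
have h0 : (0 < iter_prime i n)%N by lia.
have := nth_prime_gt (iter_prime i n) h0; lia.
Qed.

Lemma iter_ratio n K : (0 < n)%N -> exists k0, forall k, (k0 <= k)%N ->
  (K * iter_prime k n <= iter_prime k.+1 n)%N.
Proof.
move=> hn; case: (nth_prime_lin K) => m0 hm0; exists m0 => k hk /=.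
apply: hm0; have := iter_ge n k hn; lia.
Qed.

From mathcomp Require Import lra.
Import numFieldNormedType.Exports.
Local Open Scope classical_set_scope.
Local Open Scope ring_scope.

Lemma sep_seq (R : realType) (s : seq R) (x : R) :
  exists2 d : R, 0 < d & forall y, y \in s -> y != x -> d <= `|y - x|.
Proof.
elim: s => [|y s [d d0 hd]]; first by exists 1 => // y; rewrite in_nil.
case: (eqVneq y x) => [->|yx].
  exists d => // z; rewrite inE => /orP[/eqP -> /eqP //|]; exact: hd.
exists (Num.min d `|y - x|); first by rewrite lt_min d0 normr_gt0 subr_eq0.
move=> z; rewrite inE => /orP[/eqP -> _|zs zx]; first by rewrite ge_min lexx orbT.
by rewrite ge_min hd.
Qed.

Lemma core (R : realType) (n : nat) (hn : (0 < n)%N) (x : R) : 0 < x ->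
  exists2 d : R, 0 < d & forall r, ratio_set R (primes_tower n) r -> r != x ->
    d <= `|r - x|.
Proof.
move=> x0.
set a := fun k => iter_prime k n.
set K := (Num.truncn (2 * x + 2 / x)).+1.
have hK : 2 * x + 2 / x < K%:R by rewrite /K truncnS_gt.
have hKx1 : 2 * x < K%:R.
  have : 0 < 2 / x by rewrite divr_gt0.
  lra.
have hKx2 : 2 < K%:R * x.
  have h2x : 0 < 2 * x by rewrite mulr_gt0.
  have : 2 / x < K%:R by lra.
  by rewrite ltr_pdivrMr.
case: (iter_ratio n K hn) => k0 hk0.
have apos : forall k, (0 < a k)%N by move=> k; have := iter_ge n k hn; rewrite /a; lia.
set s := [seq (a i)%:R / (a j)%:R : R | i <- iota 0 k0.+1, j <- iota 0 k0.+1].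
case: (sep_seq _ s x) => de de0 hde.
exists (Num.min de (x / 2)); first by rewrite lt_min de0 divr_gt0.
move=> r0 [p [q [[i i0 ->] [j j0 ->] ->]]] rx.
rewrite -/(a i) -/(a j) in rx *.
rewrite ge_min; case: (leP (x / 2) `|(a i)%:R / (a j)%:R - x|) => hc.
  by apply/orP; right.
apply/orP; left; apply: hde => //.
have bpos : (0 : R) < (a j)%:R by rewrite ltr0n.
set r := (a i)%:R / (a j)%:R : R.
have hr : r * (a j)%:R = (a i)%:R by rewrite /r divfK // gt_eqF.
have [hr1 hr2] : x / 2 < r /\ r < 3 * x / 2.
  move: hc; rewrite ltr_norml /r => /andP[]; lra.
case: (ltngtP i j) => hij.
-
  have hj : (j <= k0)%N.
    rewrite leqNgt; apply/negP => hj.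
    have hh1 : (k0 <= j.-1)%N by lia.
    have hh2 : (i <= j.-1)%N by lia.
    have h1 := hk0 j.-1 hh1.
    have h2 := iter_mono n j.-1 i hn hh2.
    have e : j.-1.+1 = j by lia.
    rewrite e in h1.
    have h3 : (K * a i <= a j)%N by apply: leq_trans h1; rewrite leq_mul2l h2 orbT.
    have h4 : K%:R * (a i)%:R <= (a j)%:R :> R by rewrite -natrM ler_nat.
    rewrite -hr in h4.
    have : (x / 2) * (a j)%:R < r * (a j)%:R by rewrite ltr_pM2r.
    nra.
  by rewrite /r /s; apply: (@allpairs_f _ _ _ (fun i j => (a i)%:R / (a j)%:R : R)); rewrite mem_iota; lia.
-
  have hi : (i <= k0)%N.
    rewrite leqNgt; apply/negP => hi.
    have hh1 : (k0 <= i.-1)%N by lia.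
    have hh2 : (j <= i.-1)%N by lia.
    have h1 := hk0 i.-1 hh1.
    have h2 := iter_mono n i.-1 j hn hh2.
    have e : i.-1.+1 = i by lia.
    rewrite e in h1.
    have h3 : (K * a j <= a i)%N by apply: leq_trans h1; rewrite leq_mul2l h2 orbT.
    have h4 : K%:R * (a j)%:R <= (a i)%:R :> R by rewrite -natrM ler_nat.
    rewrite -hr in h4.
    have : r * (a j)%:R < (3 * x / 2) * (a j)%:R by rewrite ltr_pM2r.
    nra.
  by rewrite /r /s; apply: (@allpairs_f _ _ _ (fun i j => (a i)%:R / (a j)%:R : R)); rewrite mem_iota; lia.
- have -> : r = (a 0%N)%:R / (a 0%N)%:R.
    by rewrite /r hij !divff // gt_eqF // ltr0n.
  by rewrite /r /s; apply: (@allpairs_f _ _ _ (fun i j => (a i)%:R / (a j)%:R : R)); rewrite mem_iota.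
Qed.

Theorem corollary3 (R : realType) (n : nat) (hn : (0 < n)%N) :
  ~ R_dense R (primes_tower n) /\
  ((fun k : nat => (iter_prime k.+1 n)%:R / (iter_prime k n)%:R : R)
     @ \oo --> +oo) /\
  limit_point (ratio_set R (primes_tower n)) `&` [set x : R | 0 < x] = set0.
Proof.
split; [|split].
- move=> hd.
  case: (core R n hn 1 ltr01) => d d0 hdd.
  have : (1 : R) < 1 + d by lra.
  case/(hd 1 (1 + d) ltr01) => r hr /andP[h1 h2].
  have rx : r != 1 by rewrite gt_eqF.
  have := hdd r hr rx.
  rewrite ger0_norm; last by rewrite subr_ge0 ltW.
  lra.
- apply/cvgryPge => A.
  set K := (Num.truncn `|A|).+1.
  have hAK : A <= K%:R.
    apply: le_trans (ler_norm A) _; apply: ltW; exact: truncnS_gt.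
  case: (iter_ratio n K hn) => k0 hk0.
  near=> k.
  have hk : (k0 <= k)%N by near: k; exact: nbhs_infty_ge.
  have apos : (0 : R) < (iter_prime k n)%:R.
    by rewrite ltr0n; have := iter_ge n k hn; lia.
  apply: le_trans hAK _.
  rewrite ler_pdivlMr // -natrM ler_nat.
  exact: hk0.
- rewrite -subset0 => x [hlp hx].
  case: (core R n hn x hx) => d d0 hdd.
  case: (hlp _ (nbhsx_ballx x d d0)) => y [yx Ey By].
  have := hdd y Ey yx.
  move: By; rewrite -ball_normE /ball_ /= distrC.
  lra.
Unshelve. all: by end_near.
Qed.
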